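(* Let $G$ be a finite perfect graph. Then $G$ is symmetric with respect to graph entropy (i.e., the uniform distribution on $V(G)$ maximizes $H(G,P)$ over all probability distributions $P$ on $V(G)$) if and only if $V(G)$ can be partitioned into vertex sets of pairwise disjoint cliques of $G$, each of size $\omega(G)$ (the maximum clique size of $G$).
   Context: For a finite graph $G$ with $V(G)=\{1,\dots,n\}$, the vertex packing polytope $VP(G)\subseteq\mathbb{R}^n$ is the convex hull of the characteristic vectors of the independent sets of $G$. For a probability distribution $P=(p_1,\dots,p_n)$ on $V(G)$, the graph entropy is $H(G,P)=\min_{\mathbf a\in VP(G)}\sum_{i=1}^n p_i\log(1/a_i)$. A graph is called symmetric with respect to graph entropy if the uniform distribution on its vertex set attains $\max_P H(G,P)$. *)

(* Defs.v *)
From HB Require Import structures.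
From mathcomp Require Import all_boot all_order all_algebra.
From mathcomp Require Import all_classical all_reals.
From mathcomp Require Import ereal exp.

Set Implicit Arguments.
Unset Strict Implicit.
Unset Printing Implicit Defensive.

Import Order.TTheory GRing.Theory Num.Theory.
Local Open Scope ring_scope.

Section GraphDefs.
Variables (T : finType) (e : rel T).

Definition is_clique (S : {set T}) : bool :=
  [forall x in S, forall y in S, (x != y) ==> e x y].

Definition is_stable (S : {set T}) : bool :=
  [forall x in S, forall y in S, ~~ e x y].

Definition clique_number_in (A : {set T}) : nat :=
  \max_(S : {set T} | (S \subset A) && is_clique S) #|S|.

Definition clique_number : nat := clique_number_in [set: T].

Definition colorable_in (A : {set T}) (k : nat) : bool :=
  [exists f : {ffun T -> 'I_#|T|.+1},
     [forall x in A, (f x < k)%N] &&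
     [forall x in A, forall y in A, e x y ==> (f x != f y)]].

Definition chromatic_number_in (A : {set T}) : nat :=
  \big[minn/#|T|]_(k < #|T|.+1 | colorable_in A k) k.

Definition perfect : Prop :=
  forall A : {set T}, chromatic_number_in A = clique_number_in A.

End GraphDefs.

Section Entropy.
Variables (R : realType) (T : finType) (e : rel T).

Definition prob_dist (p : T -> R) : Prop :=
  (forall x, 0 <= p x) /\ \sum_(x : T) p x = 1.

(* vertex packing polytope: convex hull of characteristic vectors of
   independent sets, written as the set of convex combinations *)
Definition VP : set (T -> R) :=
  [set a | exists lam : {set T} -> R,
     [/\ forall S, 0 <= lam S,
         \sum_(S : {set T}) lam S = 1,
         forall S, ~~ is_stable e S -> lam S = 0 &
         forall x, a x = \sum_(S : {set T}) lam S * (x \in S)%:R]].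

Definition ent_term (p a : R) : \bar R :=
  if p == 0 then 0%E
  else if a == 0 then +oo%E
  else (p * ln (a^-1))%:E.

Definition graph_entropy (p : T -> R) : \bar R :=
  ereal_inf [set (\sum_(x : T) ent_term (p x) (a x))%E | a in VP].

Definition uniform_dist : T -> R := fun _ => (#|T|%:R)^-1.

Definition entropy_symmetric : Prop :=
  forall p : T -> R, prob_dist p ->
    (graph_entropy p <= graph_entropy uniform_dist)%E.

End Entropy.

(* Main.v *)
Require Import Defs.
From HB Require Import structures.
From mathcomp Require Import all_boot all_order all_algebra.
From mathcomp Require Import all_classical all_reals.
From mathcomp Require Import ereal exp.
From mathcomp Require Import fintype finset.

Set Implicit Arguments.
Unset Strict Implicit.
Unset Printing Implicit Defensive.

Section Msz.
Variables (V : finType) (P : pred {set V}).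
Hypothesis P0 : P set0.
Definition msz (A : {set V}) := \max_(S : {set V} | (S \subset A) && P S) #|S|.

Lemma msz_ge (S A : {set V}) : S \subset A -> P S -> #|S| <= msz A.
Proof. by move=> h1 h2; rewrite /msz (bigD1 S) ?h1 ?h2 //= leq_maxl. Qed.

Lemma msz_ex (A : {set V}) : exists S : {set V}, [/\ S \subset A, P S & #|S| = msz A].
Proof.
have h : 0 < #|[pred S : {set V} | (S \subset A) && P S]|.
  by apply/card_gt0P; exists set0; rewrite inE sub0set P0.
have [S] := eq_bigmax_cond (fun S : {set V} => #|S|) h.
by rewrite inE => /andP[h1 h2] h3; exists S; split.
Qed.

Lemma msz_mono (A B : {set V}) : A \subset B -> msz A <= msz B.
Proof.
move=> AB; have [S [h1 h2 <-]] := msz_ex A.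
by apply: msz_ge => //; apply: subset_trans AB.
Qed.
End Msz.

Section Cliques.
Variables (V : finType) (r : rel V).

Lemma cliqueP (S : {set V}) : reflect (forall x y, x \in S -> y \in S -> x != y -> r x y) (is_clique r S).
Proof.
apply: (iffP forallP) => [h x y xS yS nxy| h x].
  by move: (h x); rewrite xS /= => /forallP /(_ y); rewrite yS nxy.
by apply/implyP => xS; apply/forallP => y; apply/implyP => yS; apply/implyP; apply: h.
Qed.

Lemma stableP (S : {set V}) : reflect (forall x y, x \in S -> y \in S -> ~~ r x y) (is_stable r S).
Proof.
apply: (iffP forallP) => [h x y xS yS| h x].
  by move: (h x); rewrite xS /= => /forallP /(_ y); rewrite yS.
by apply/implyP => xS; apply/forallP => y; apply/implyP => yS; apply: h.
Qed.

Lemma clique0 : is_clique r set0.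
Proof. by apply/cliqueP => x y; rewrite inE. Qed.

Lemma stable0 : is_stable r set0.
Proof. by apply/stableP => x y; rewrite inE. Qed.

Definition omg := msz (is_clique r).
Definition alp := msz (is_stable r).

Definition colb (A : {set V}) k := exists f : V -> nat,
  (forall x, x \in A -> f x < k) /\
  (forall x y, x \in A -> y \in A -> r x y -> f x != f y).

Definition hp := forall A, colb A (omg A).

Lemma omg_ge (S A : {set V}) : S \subset A -> is_clique r S -> #|S| <= omg A.
Proof. exact: msz_ge. Qed.
Lemma omg_ex (A : {set V}) : exists S : {set V}, [/\ S \subset A, is_clique r S & #|S| = omg A].
Proof. exact: msz_ex clique0 A. Qed.
Lemma omg_mono (A B : {set V}) : A \subset B -> omg A <= omg B.
Proof. by apply: msz_mono; apply: clique0. Qed.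
Lemma alp_ge (S A : {set V}) : S \subset A -> is_stable r S -> #|S| <= alp A.
Proof. exact: msz_ge. Qed.
Lemma alp_ex (A : {set V}) : exists S : {set V}, [/\ S \subset A, is_stable r S & #|S| = alp A].
Proof. exact: msz_ex stable0 A. Qed.
Lemma alp_mono (A B : {set V}) : A \subset B -> alp A <= alp B.
Proof. by apply: msz_mono; apply: stable0. Qed.

End Cliques.

Section F1.
Variables (T : finType) (e : rel T).
Hypothesis e_irr : irreflexive e.

Lemma colorable_full (A : {set T}) : colorable_in e A #|T|.
Proof.
apply/existsP; exists [ffun x => widen_ord (leqnSn _) (enum_rank x)].
apply/andP; split; apply/forallP => x; apply/implyP => xA; rewrite ?ffunE //=.
apply/forallP => y; apply/implyP => yA; apply/implyP => exy.
rewrite !ffunE; apply/negP => /eqP [] /val_inj/enum_rank_inj exy'.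
by move: exy; rewrite exy' e_irr.
Qed.

Lemma chrom_col (A : {set T}) : colorable_in e A (chromatic_number_in e A).
Proof.
rewrite /chromatic_number_in.
apply: (big_ind (fun k => colorable_in e A k)) => //.
- exact: colorable_full.
- by move=> x y hx hy; rewrite /minn; case: ifP.
Qed.

Lemma perfect_hp : perfect e -> hp e.
Proof.
move=> hP A; move: (chrom_col A); rewrite hP => /existsP [f /andP [h1 h2]].
exists (fun x => val (f x)); split.
  by move=> x xA; move/forallP: h1 => /(_ x); rewrite xA.
move=> x y xA yA exy; move/forallP: h2 => /(_ x); rewrite xA /= => /forallP /(_ y).
by rewrite yA exy.
Qed.
End F1.

Section F2.
Variables (T I : finType) (e : rel T).
Definition bl : rel (T * I) := fun u v => (u != v) && ((u.1 == v.1) || e u.1 v.1).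

Lemma bl_irr : irreflexive bl.
Proof. by move=> u; rewrite /bl eqxx. Qed.

Lemma bl_swapl a b y : a.1 = b.1 -> bl a y -> y != b -> bl b y.
Proof. by rewrite /bl => -> /andP [_ ->] h; rewrite andbT eq_sym. Qed.
Lemma bl_swapr a b y : a.1 = b.1 -> bl y a -> y != b -> bl y b.
Proof. by rewrite /bl => -> /andP [_ ->] h; rewrite andbT. Qed.
Lemma bl_twin a b : a.1 = b.1 -> a != b -> bl a b.
Proof. by rewrite /bl => -> ->; rewrite eqxx. Qed.

Lemma pigeon (f : (T * I) -> nat) (Q : {set T * I}) w x :
  {in Q &, injective f} -> (forall y, y \in Q -> f y < w) -> x < w ->
  (forall y, y \in Q -> f y != x) -> #|Q| < w.
Proof.
move=> finj hQ hx hn.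
have : size (x :: map f (enum Q)) <= size (iota 0 w).
  apply: uniq_leq_size.
    rewrite /= map_inj_in_uniq ?enum_uniq; last by move=> a b; rewrite !mem_enum; apply: finj.
    rewrite andbT; apply/mapP => [[y]]; rewrite mem_enum => yQ /eqP; rewrite eq_sym.
    by rewrite (negbTE (hn y yQ)).
  move=> z; rewrite inE mem_iota add0n => /orP [/eqP -> //|/mapP [y]].
  by rewrite mem_enum => yQ ->; apply: hQ.
by rewrite /= size_map size_iota -cardE.
Qed.

Lemma hp_bl : hp e -> hp bl.
Proof.
move=> he A; move: {2}#|A|.+1 (ltnSn #|A|) => m; elim: m A => // m IH A HA.
case: (boolP [forall u in A, forall v in A, (u.1 == v.1) ==> (u == v)]) => [hinj | hni].
-
  have inj : {in A &, injective fst}.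
    move=> u v uA vA huv; move/forallP: hinj => /(_ u); rewrite uA /= => /forallP /(_ v).
    by rewrite vA huv eqxx /= => /eqP.
  set B := [set u.1 | u in A].
  have [f [hf1 hf2]] := he B.
  have hB : omg e B <= omg bl A.
    have [C [CB Ccl <-]] := omg_ex e B.
    set Q := [set u in A | u.1 \in C].
    have QA : Q \subset A by apply/subsetP => u; rewrite inE => /andP [].
    have -> : C = [set u.1 | u in Q].
      apply/setP => x; apply/idP/idP => [xC|].
        have := subsetP CB x xC; case/imsetP => u uA hx.
        by apply/imsetP; exists u => //; rewrite inE uA -hx xC.
      by case/imsetP => u; rewrite inE => /andP [_ h] ->.
    rewrite card_in_imset; last by move=> u v /(subsetP QA) uA /(subsetP QA) vA; apply: inj.
    apply: omg_ge => //; apply/cliqueP => u v; rewrite !inE => /andP [uA uC] /andP [vA vC] nuv.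
    rewrite /bl nuv /=; apply/orP; right; apply: (cliqueP _ _ Ccl) => //.
    by apply: contra nuv => /eqP h; apply/eqP; apply: inj.
  exists (fun u => f u.1); split.
    by move=> u uA; apply: leq_trans hB; apply: hf1; apply/imsetP; exists u.
  move=> u v uA vA; rewrite /bl => /andP [nuv /orP [/eqP h|h]].
    by move: nuv; rewrite (inj u v uA vA h) eqxx.
  by apply: hf2 => //; apply/imsetP; [exists u | exists v].
-
  have [u [v [uA vA huv nuv]]] : exists u v, [/\ u \in A, v \in A, u.1 = v.1 & u != v].
    move/forallPn: hni => [u]; rewrite negb_imply => /andP [uA /forallPn [v]].
    rewrite negb_imply => /andP [vA]; rewrite negb_imply => /andP [/eqP h1 h2].
    by exists u, v.
  set A' := A :\ v.
  have A'A : A' \subset A by apply: subsetDl.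
  have hA' : #|A'| < #|A| by apply: proper_card; apply/properP; split => //; exists v => //; rewrite !inE eqxx.
  have uA' : u \in A' by rewrite !inE nuv uA.
  have vA' : v \notin A' by rewrite !inE eqxx.
  have [f [hf1 hf2]] := IH A' (leq_trans hA' HA).
  set w := omg bl A'.
  have w_gt0 : 0 < w.
    apply: leq_trans (omg_ge (S := [set u]) _ _) => //; first by rewrite cards1.
      by rewrite sub1set.
    by apply/cliqueP => a b; rewrite !inE => /eqP -> /eqP ->; rewrite eqxx.
  have blvu : forall y, bl v y -> y != u -> bl u y.
    by move=> y; rewrite /bl huv => /andP [_ ->] h; rewrite andbT eq_sym.
  have blyv : forall y, bl y v -> y != u -> bl y u.
    by move=> y; rewrite /bl huv => /andP [_ ->] h; rewrite andbT.
  case: (boolP [exists Q : {set T * I}, (Q \subset A') && is_clique bl Q && (#|Q| == w) && (u \in Q)]).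
  + case/existsP => Q /andP [/andP [/andP [QA' Qcl] /eqP Qw] uQ].
    have vQ : v \notin Q by apply: contra vA'; apply: (subsetP QA').
    have hw : w < omg bl A.
      have hc : #|v |: Q| = w.+1 by rewrite cardsU1 vQ Qw.
      rewrite -hc.
      apply: omg_ge; first by rewrite subUset sub1set vA (subset_trans QA').
      apply/cliqueP => a b; rewrite !inE => /orP [/eqP ->|aQ] /orP [/eqP ->|bQ].
      * by rewrite eqxx.
      * move=> nvb; case: (eqVneq b u) => [->|nbu]; first by apply: bl_twin; rewrite // eq_sym.
        apply: (bl_swapl huv); last by rewrite eq_sym.
        by apply: (cliqueP _ _ Qcl) => //; rewrite eq_sym.
      * move=> nav; case: (eqVneq a u) => [->|nau]; first by apply: bl_twin.
        apply: (bl_swapr huv) => //.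
        by apply: (cliqueP _ _ Qcl).
      * by apply: (cliqueP _ _ Qcl).
    exists (fun y => if y == v then w else f y); split.
      move=> y yA; case: (eqVneq y v) => [_|nyv]; first by [].
      by apply: leq_trans (hf1 y _) (ltnW hw); rewrite !inE nyv.
    move=> a b aA bA hab.
    have aA' : a != v -> a \in A' by move=> h; rewrite !inE h.
    have bA' : b != v -> b \in A' by move=> h; rewrite !inE h.
    case: (eqVneq a v) => [eav|nav]; case: (eqVneq b v) => [ebv|nbv].
    * by move: hab; rewrite eav ebv bl_irr.
    * by rewrite neq_ltn (hf1 b (bA' nbv)) orbT.
    * by rewrite neq_ltn (hf1 a (aA' nav)).
    * by apply: hf2 => //; [apply: aA' | apply: bA'].
  + move=> hnQ.
    set C := [set y in A' | f y == f u].
    set D := A' :\: (C :\ u).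
    have DA' : D \subset A' by apply: subsetDl.
    have [g [hg1 hg2]] := IH D (leq_trans (leq_ltn_trans (subset_leq_card DA') hA') HA).
    have hD : omg bl D < w.
      have [Q [QD Qcl Qc]] := omg_ex bl D.
      rewrite -Qc.
      have QA' : Q \subset A' by apply: subset_trans DA'.
      have : #|Q| <= w by rewrite Qc; apply: omg_mono.
      rewrite leq_eqVlt => /orP [/eqP Qw|//].
      have uQ : u \notin Q.
        apply/negP => uQ; move/existsP: hnQ; apply; exists Q.
        by rewrite QA' Qcl Qw eqxx uQ.
      apply: (@pigeon f Q w (f u)).
      - move=> a b aQ bQ fab; apply/eqP; apply/negP => nab.
        by move: (hf2 a b (subsetP QA' a aQ) (subsetP QA' b bQ) (elimT (cliqueP _ _) Qcl a b aQ bQ (introN idP nab))); rewrite fab eqxx.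
      - by move=> y yQ; apply: hf1; apply: (subsetP QA').
      - exact: hf1.
      - move=> y yQ; apply/eqP => fyu.
        have yA' := subsetP QA' y yQ.
        have : y \in D by apply: (subsetP QD).
        rewrite in_setD => /andP [+ _]; rewrite in_setD1 negb_and negbK => /orP [/eqP eyu|].
          by move: uQ; rewrite -eyu yQ.
        by rewrite in_set yA' fyu eqxx.
    exists (fun y => if y \in D then g y else w.-1); split.
      move=> y yA; apply: leq_trans (omg_mono bl A'A).
      case: ifP => [yD|_]; first by apply: ltn_trans (hg1 y yD) hD.
      by rewrite prednK.
    have outD : forall y, y \in A -> y \notin D -> (y == v) || [&& y \in A', f y == f u & y != u].
      move=> y yA; rewrite !inE; case: (eqVneq y v) => //= nyv.
      by rewrite yA /= andbT negbK => /andP [-> ->].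
    move=> a b aA bA hab.
    case: (boolP (a \in D)) => aD; case: (boolP (b \in D)) => bD.
    * by apply: hg2.
    * by rewrite neq_ltn -ltnS prednK // (leq_ltn_trans (hg1 a aD) hD).
    * by rewrite eq_sym neq_ltn -ltnS prednK // (leq_ltn_trans (hg1 b bD) hD).
    * exfalso.
      move: (outD a aA aD) (outD b bA bD) => /orP [/eqP eav|/and3P [aA' fa nau]] /orP [/eqP ebv|/and3P [bA' fb nbu]].
      - by move: hab; rewrite eav ebv bl_irr.
      - move: hab; rewrite eav => hab.
        have := hf2 u b uA' bA' (bl_swapl (esym huv) hab nbu).
        by rewrite (eqP fb) eqxx.
      - move: hab; rewrite ebv => hab.
        have := hf2 a u aA' uA' (bl_swapr (esym huv) hab nau).
        by rewrite (eqP fa) eqxx.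
      - by move: (hf2 a b aA' bA' hab); rewrite (eqP fa) (eqP fb) eqxx.
Qed.
End F2.

Lemma card_setsum (V : finType) (A : {set V}) (P : pred V) :
  #|[set y in A | P y]| = \sum_(y in A) P y.
Proof.
rewrite -sum1_card big_mkcond [RHS]big_mkcond /=; apply: eq_bigr => y _.
by rewrite inE; case: (y \in A); case: (P y).
Qed.

Lemma sum_eq1 m x : x < m -> \sum_(c < m) (x == c) = 1.
Proof.
move=> h; rewrite (bigD1 (Ordinal h)) //= eqxx big1 // => c hc.
apply/eqP; rewrite eqb0; apply: contra hc => /eqP hx; apply/eqP/val_inj => /=.
by rewrite hx.
Qed.

Section F3.
Variables (T : finType) (e : rel T).
Hypothesis e_irr : irreflexive e.
Hypothesis he : hp e.

Lemma alp_gt0 (A : {set T}) : A != set0 -> 0 < alp e A.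
Proof.
case/set0Pn => x xA; apply: leq_trans (alp_ge (S := [set x]) _ _); first by rewrite cards1.
  by rewrite sub1set.
by apply/stableP => a b; rewrite !inE => /eqP -> /eqP ->; rewrite e_irr.
Qed.

Lemma F3 (A : {set T}) : A != set0 -> exists K : {set T},
  [/\ K \subset A, is_clique e K &
      forall S : {set T}, S \subset A -> is_stable e S -> #|S| = alp e A -> ~~ [disjoint K & S]].
Proof.
move=> A0.
case: (boolP [exists K : {set T}, [&& K \subset A, is_clique e K &
    [forall S : {set T}, [&& S \subset A, is_stable e S & #|S| == alp e A] ==> ~~ [disjoint K & S]]]]).
  case/existsP => K /and3P [h1 h2 /forallP h3]; exists K; split => // S h4 h5 h6.
  by move: (h3 S); rewrite h4 h5 h6 eqxx.
move=> hno; exfalso.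
pose good (K S : {set T}) := [&& S \subset A, is_stable e S, #|S| == alp e A & [disjoint K & S]].
pose sel (K : {set T}) := odflt set0 [pick S | good K S].
have hsel : forall K : {set T}, K \subset A -> is_clique e K -> good K (sel K).
  move=> K h1 h2; rewrite /sel; case: pickP => [S //|hn]; exfalso.
  move/existsP: hno; apply; exists K; rewrite h1 h2 /=; apply/forallP => S.
  apply/implyP => /and3P [h4 h5 h6]; move: (hn S).
  by rewrite /good h4 h5 h6 /= => ->.
pose cl := [set K : {set T} | (K \subset A) && is_clique e K].
pose Ah := [set u : T * {set T} | (u.2 \in cl) && (u.1 \in sel u.2)].
have memAh : forall u, (u \in Ah) = (u.2 \in cl) && (u.1 \in sel u.2) by move=> u; rewrite inE.
clearbody Ah.
have [f [hf1 hf2]] := hp_bl (I := {set T}) he Ah.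
set a := alp e A; set k := #|cl|; set m := omg (@bl T {set T} e) Ah.
have a_gt0 : 0 < a by apply: alp_gt0.
have hselK : forall K : {set T}, K \in cl -> good K (sel K).
  by move=> K; rewrite inE => /andP [h1 h2]; apply: hsel.
have selA : forall K : {set T}, K \in cl -> sel K \subset A.
  by move=> K /hselK /and4P [].
have selS : forall K : {set T}, K \in cl -> is_stable e (sel K).
  by move=> K /hselK /and4P [].
have hm : m < k.
  have [Q [QAh Qcl Qc]] := omg_ex (@bl T {set T} e) Ah.
  have inQ : forall u, u \in Q -> (u.2 \in cl) && (u.1 \in sel u.2).
    by move=> u /(subsetP QAh); rewrite memAh.
  set C := [set u.1 | u in Q].
  have Ccl : C \in cl.
    rewrite inE; apply/andP; split.
      apply/subsetP => x /imsetP [u uQ ->]; move/andP: (inQ u uQ) => [h1 h2].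
      exact: (subsetP (selA _ h1)).
    apply/cliqueP => x y /imsetP [p pQ ->] /imsetP [q qQ ->] npq.
    have npq' : p != q by apply: contraNneq npq => ->.
    move: (elimT (cliqueP _ _) Qcl p q pQ qQ npq'); rewrite /bl npq' /=.
    by rewrite (negbTE npq).
  have inj : {in Q &, injective snd}.
    move=> p q pQ qQ hpq; apply/eqP; apply/negP => /negP npq.
    move: (elimT (cliqueP _ _) Qcl p q pQ qQ npq); rewrite /bl npq /=.
    move/andP: (inQ p pQ) => [h1 h2]; move/andP: (inQ q qQ) => [h3 h4].
    case/orP => [/eqP h|].
      by move: npq; rewrite (surjective_pairing p) (surjective_pairing q) h hpq eqxx.
    rewrite hpq in h1 h2.
    by move/stableP: (selS _ h1) => /(_ _ _ h2 h4) /negbTE ->.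
  rewrite /m -Qc -(card_in_imset inj).
  have : [set u.2 | u in Q] \subset cl :\ C.
    apply/subsetP => K /imsetP [u uQ ->]; move/andP: (inQ u uQ) => [h1 h2].
    rewrite in_setD1 h1 andbT; apply/eqP => hC.
    move: (hselK _ h1) => /and4P [_ _ _ hd].
    have : u.1 \in u.2 by rewrite hC; apply/imsetP; exists u.
    by move/(disjointFr hd); rewrite h2.
  move/subset_leq_card; rewrite /k (cardsD1 C cl) Ccl add1n.
  by [].
have hcls : forall S : {set T * {set T}}, S \subset Ah -> is_stable (@bl T {set T} e) S -> #|S| <= a.
  move=> S SAh Sst.
  have inj : {in S &, injective fst}.
    move=> p q pS qS hpq; apply/eqP; apply/negP => /negP npq.
    by move/stableP: Sst => /(_ p q pS qS); rewrite (bl_twin e hpq npq).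
  rewrite -(card_in_imset inj); apply: alp_ge.
    apply/subsetP => x /imsetP [u uS ->]; move: (subsetP SAh u uS); rewrite memAh => /andP [h1 h2].
    exact: (subsetP (selA _ h1)).
  apply/stableP => x y /imsetP [p pS ->] /imsetP [q qS ->].
  case: (eqVneq p q) => [->|npq]; first by rewrite e_irr.
  by move/stableP: Sst => /(_ p q pS qS); rewrite /bl npq /= negb_or => /andP [].
have h4 : #|Ah| <= m * a.
  have -> : #|Ah| = \sum_(c < m) #|[set y in Ah | f y == c]|.
    rewrite -sum1_card (eq_bigr (fun y => \sum_(c < m) (f y == c))); last first.
      by move=> y yAh; rewrite sum_eq1 //; apply: hf1.
    rewrite exchange_big /=; apply: eq_bigr => c _; by rewrite card_setsum.
  rewrite -[m in m * a]card_ord -sum_nat_const; apply: leq_sum => c _.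
  apply: hcls; first by apply/subsetP => y; rewrite inE => /andP [].
  apply/stableP => x y; rewrite !inE => /andP [xA /eqP fx] /andP [yA /eqP fy].
  apply/negP => hxy; move: (hf2 x y xA yA hxy); rewrite fx fy.
  by rewrite eqxx.
have h5 : #|Ah| = k * a.
  rewrite -sum1_card big_mkcond /=.
  rewrite (eq_bigr (fun p : T * {set T} => if (p.1, p.2) \in Ah then 1 else 0)); last by case.
  rewrite -(pair_bigA _ (fun x K => if (x, K) \in Ah then 1 else 0)) /=.
  rewrite exchange_big /= /k -sum_nat_const [RHS]big_mkcond /=; apply: eq_bigr => K _.
  case: (boolP (K \in cl)) => hK.
    move/hselK: (hK) => /and4P [_ _ /eqP hs _]; rewrite /a -hs.
    rewrite -sum1_card [RHS]big_mkcond /=; apply: eq_bigr => x _; by rewrite memAh /= hK.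
  by apply: big1 => x _; rewrite memAh /= (negbTE hK).
by move: (leq_trans (eq_leq (esym h5)) h4); rewrite leq_mul2r leqNgt hm orbF; case: (a) a_gt0.
Qed.
End F3.

Section F4.
Variables (T : finType) (e : rel T).
Hypothesis e_irr : irreflexive e.
Hypothesis he : hp e.

Lemma F4 (A : {set T}) : exists c : T -> nat,
  (forall x, x \in A -> c x < alp e A) /\
  (forall x y, x \in A -> y \in A -> x != y -> c x = c y -> e x y).
Proof.
move: {2}#|A|.+1 (ltnSn #|A|) => m; elim: m A => // m IH A HA.
case: (eqVneq A set0) => [->|A0].
  by exists (fun _ => 0); split => x; rewrite inE.
have [K [KA Kcl Kmeet]] := F3 e_irr he A0.
have [S0 [S0A S0st S0c]] := alp_ex e A.
have K0 : K != set0.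
  apply/set0Pn; have := Kmeet _ S0A S0st S0c; rewrite -setI_eq0 => /set0Pn [x].
  by rewrite inE => /andP [xK _]; exists x.
set A' := A :\: K.
have hA' : #|A'| < #|A|.
  apply: proper_card; apply/properP; split; first by apply: subsetDl.
  case/set0Pn: K0 => x xK; exists x; first by apply: (subsetP KA).
  by rewrite inE xK.
have [c [hc1 hc2]] := IH A' (leq_trans hA' (HA : #|A| <= m)).
have halp : alp e A' < alp e A.
  have [S [SA' Sst Sc]] := alp_ex e A'.
  have SA : S \subset A by apply: subset_trans SA' (subsetDl _ _).
  rewrite -Sc ltn_neqAle alp_ge // andbT; apply/eqP => hS.
  have := Kmeet S SA Sst hS; rewrite -setI_eq0 => /set0Pn [x].
  rewrite inE => /andP [xK xS]; move: (subsetP SA' x xS).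
  by rewrite inE xK.
exists (fun x => if x \in K then 0 else (c x).+1); split.
  move=> x xA; case: ifP => xK; first by apply: leq_ltn_trans halp.
  by apply: leq_ltn_trans halp; apply: hc1; rewrite inE xK xA.
move=> x y xA yA nxy.
case: ifP => xK; case: ifP => yK //.
  by move=> _; apply: (elimT (cliqueP _ _) Kcl).
move=> [] hxy; apply: hc2 => //; by rewrite inE ?xK ?yK.
Qed.
End F4.

Section F5.
Variables (T : finType) (e : rel T).
Hypothesis e_irr : irreflexive e.
Hypothesis he : hp e.

Lemma F5 : alp e [set: T] * omg e [set: T] <= #|T| ->
  exists P : {set {set T}}, partition P [set: T] /\
    (forall B, B \in P -> is_clique e B /\ #|B| = omg e [set: T]).
Proof.
move=> hle.
have [c [hc1 hc2]] := F4 e_irr he [set: T].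
set a := alp e [set: T]; set w := omg e [set: T].
pose F (i : nat) := [set x | c x == i].
have Fcl : forall i, is_clique e (F i).
  move=> i; apply/cliqueP => x y; rewrite !inE => /eqP hx /eqP hy nxy.
  by apply: hc2 => //; rewrite hx hy.
have Fw : forall i, #|F i| <= w by move=> i; apply: omg_ge => //; apply: subsetT.
have hsum : #|T| = \sum_(i < a) #|F i|.
  rewrite -cardsT -sum1_card (eq_bigr (fun y => \sum_(i < a) (c y == i))); last first.
    by move=> y _; rewrite sum_eq1 //; apply: hc1; rewrite inE.
  rewrite exchange_big /=; apply: eq_bigr => i _.
  rewrite -(card_setsum [set: T] (fun y => c y == i)); apply: eq_card => y.
  by rewrite !inE.
have Feq : forall i, i < a -> #|F i| = w.
  move=> i ia; apply/eqP; rewrite eqn_leq Fw /=; rewrite leqNgt; apply/negP => hlt.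
  have : #|T| < a * w.
    rewrite hsum (bigD1 (Ordinal ia)) //=.
    have -> : a * w = w + (a.-1) * w.
      by case: (a) ia => // a' _; rewrite mulSn.
    rewrite -addSn; apply: leq_trans (leq_add hlt (leqnn _)) _; rewrite leq_add2l.
    apply: (@leq_trans (\sum_(j < a | j != Ordinal ia) w)); first by apply: leq_sum => j _; apply: Fw.
    by rewrite sum_nat_const cardC1 card_ord.
  by rewrite ltnNge hle.
exists (preim_partition c [set: T]); split; first exact: preim_partitionP.
move=> B; rewrite /preim_partition /equivalence_partition => /imsetP [x _ ->].
have -> : [set y in [set: T] | c x == c y] = F (c x).
  by apply/setP => y; rewrite !inE eq_sym.
split => //; apply: Feq; apply: hc1; exact: in_setT.
Qed.
End F5.

From mathcomp Require Import ring lra.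
Import Order.TTheory GRing.Theory Num.Theory.

Section Ent.
Variables (R : realType) (T : finType) (e : rel T).
Hypothesis e_irr : irreflexive e.
Local Open Scope ring_scope.

Lemma sum_ind (X : {set T}) (f : {set T} -> R) :
  \sum_(S : {set T}) (S == X)%:R * f S = f X.
Proof.
rewrite (bigD1 X) //= eqxx mul1r big1 ?addr0 // => S /negbTE ->.
by rewrite mul0r.
Qed.

Lemma sum_mem (A : {set T}) : \sum_(x : T) ((x \in A)%:R : R) = #|A|%:R.
Proof.
rewrite (bigID (mem A)) /= [X in _ + X]big1 => [|x /negbTE ->] //.
rewrite addr0 (eq_bigr (fun _ => 1)) => [|x ->] //.
by rewrite sumr_const.
Qed.

Lemma VP_ge0 (a : T -> R) : VP e a -> forall x, 0 <= a x.
Proof.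
case=> lam [h1 h2 h3 h4] x; rewrite h4; apply: sumr_ge0 => S _.
by apply: mulr_ge0 => //; exact: ler0n.
Qed.

Lemma clique_stable_card (K S : {set T}) : is_clique e K -> is_stable e S ->
  (#|[set x in K | x \in S]| <= 1)%N.
Proof.
move=> hK hS; rewrite leqNgt; apply/negP => /card_gt1P [x [y [hx hy nxy]]].
move: hx hy; rewrite !inE => /andP [xK xS] /andP [yK yS].
move/stableP: hS => /(_ x y xS yS); by rewrite (elimT (cliqueP _ _) hK x y xK yK nxy).
Qed.

Lemma VP_clique (a : T -> R) (K : {set T}) : VP e a -> is_clique e K ->
  \sum_(x in K) a x <= 1.
Proof.
case=> lam [h1 h2 h3 h4] hK.
rewrite (eq_bigr _ (fun x _ => h4 x)) exchange_big /=.
apply: (@le_trans _ _ (\sum_(S : {set T}) lam S)); last by rewrite h2.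
apply: ler_sum => S _.
rewrite -mulr_sumr; case: (boolP (is_stable e S)) => hS; last by rewrite h3 ?mul0r.
apply: ler_piMr => //.
have -> : \sum_(x in K) ((x \in S)%:R : R) = (\sum_(x in K) ((x \in S) : nat))%:R by rewrite natr_sum.
rewrite -card_setsum lern1.
exact: clique_stable_card.
Qed.

Lemma VP_mix (a : T -> R) (S0 : {set T}) (t : R) : VP e a -> is_stable e S0 ->
  0 <= t <= 1 -> VP e (fun x => (1 - t) * a x + t * (x \in S0)%:R).
Proof.
case=> lam [h1 h2 h3 h4] hS0 /andP [t0 t1].
exists (fun S => (1 - t) * lam S + t * (S == S0)%:R); split.
- move=> S; apply: addr_ge0; apply: mulr_ge0 => //; rewrite ?subr_ge0 //; exact: ler0n.
- rewrite big_split /= -!mulr_sumr h2 (eq_bigr (fun S => (S == S0)%:R * 1)).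
    by rewrite sum_ind mulr1 mulr1 subrK.
  by move=> S _; rewrite mulr1.
- move=> S hS; rewrite h3 // mulr0 add0r.
  have -> : (S == S0) = false by apply/negP => /eqP hE; move: hS; rewrite hE hS0.
  by rewrite mulr0.
- move=> x; rewrite h4 mulr_sumr.
  have -> : \sum_(S : {set T}) ((1 - t) * lam S + t * (S == S0)%:R) * (x \in S)%:R =
     \sum_(S : {set T}) ((1 - t) * (lam S * (x \in S)%:R)) + t * \sum_(S : {set T}) (S == S0)%:R * (x \in S)%:R.
    rewrite mulr_sumr -big_split /=; apply: eq_bigr => S _; rewrite mulrDl !mulrA.
    by [].
  by rewrite sum_ind.
Qed.

Lemma VP_const (g : T -> nat) (w : nat) : (0 < w)%N -> (forall x, (g x < w)%N) ->
  (forall x y, e x y -> g x != g y) -> VP e (fun _ => (w%:R : R)^-1).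
Proof.
move=> w0 gw gp.
pose C (j : nat) := [set x | g x == j].
have Cst : forall j, is_stable e (C j).
  move=> j; apply/stableP => x y; rewrite !inE => /eqP hx /eqP hy.
  by apply/negP => /gp; rewrite hx hy eqxx.
have wR : (w%:R : R) != 0 by rewrite pnatr_eq0 -lt0n.
exists (fun S => (w%:R)^-1 * \sum_(j < w) (S == C j)%:R); split.
- move=> S; apply: mulr_ge0; first by rewrite invr_ge0 ler0n.
  by apply: sumr_ge0 => j _; exact: ler0n.
- rewrite -mulr_sumr exchange_big /= (eq_bigr (fun _ => 1)).
    by rewrite sumr_const card_ord mulVf.
  by move=> j _; rewrite (eq_bigr (fun S => (S == C j)%:R * 1)) ?sum_ind // => S _; rewrite mulr1.
- move=> S hS; rewrite big1 ?mulr0 // => j _.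
  have -> : (S == C j) = false by apply/negP => /eqP hE; move: hS; rewrite hE Cst.
  by [].
- move=> x.
  rewrite (eq_bigr (fun S => (w%:R)^-1 * \sum_(j < w) ((S == C j)%:R * (x \in S)%:R))); last first.
    by move=> S _; rewrite -mulrA mulr_suml.
  rewrite -mulr_sumr exchange_big /=.
  rewrite (eq_bigr (fun j : 'I_w => ((g x == j) : nat)%:R)); last first.
    by move=> j _; rewrite sum_ind inE.
  by rewrite -natr_sum sum_eq1 // mulr1.
Qed.

Lemma ln_le_sub1 (y : R) : 0 < y -> ln y <= y - 1.
Proof.
move=> y0; have := @le_ln1Dx R (y - 1); rewrite (addrC 1) subrK; apply.
lra.
Qed.

Lemma ent_term_ge0 (p a : R) : 0 <= p -> 0 <= a -> a <= 1 -> (0 <= ent_term p a)%E.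
Proof.
move=> p0 a0 a1; rewrite /ent_term; case: ifP => // _; case: ifP => // /negbT an0.
rewrite lee_fin; apply: mulr_ge0 => //; apply: ln_ge0.
by rewrite invf_ge1 // lt_def an0.
Qed.

Lemma ent_le (p a : T -> R) : VP e a ->
  (graph_entropy e p <= \sum_(x : T) ent_term (p x) (a x))%E.
Proof. by move=> Va; apply: ereal_inf_lbound; exists a. Qed.

Lemma VP_le1 (a : T -> R) : VP e a -> forall x, a x <= 1.
Proof.
move=> Va x; have := VP_clique Va (K := [set x]); rewrite big_set1; apply.
by apply/cliqueP => y z; rewrite !inE => /eqP -> /eqP ->; rewrite eqxx.
Qed.

Lemma GE_upper (p : T -> R) (w : nat) : prob_dist p ->
  VP e (fun _ => (w%:R : R)^-1) -> (0 < w)%N ->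
  (graph_entropy e p <= (ln w%:R)%:E)%E.
Proof.
move=> [p0 p1] Vc w0; apply: le_trans (ent_le p Vc) _.
have wn0 : (w%:R : R)^-1 != 0 by rewrite invr_eq0 pnatr_eq0 -lt0n.
rewrite (eq_bigr (fun x => (p x * ln w%:R)%:E)); last first.
  move=> x _; rewrite /ent_term; case: ifP => [/eqP ->|_]; first by rewrite mul0r.
  by rewrite (negbTE wn0) invrK.
by rewrite sumEFin -mulr_suml p1 mul1r.
Qed.

Lemma GE_lower (p : T -> R) (w : nat) : (0 < w)%N -> prob_dist p ->
  (forall a, VP e a -> \sum_(x : T) p x * a x <= (w%:R)^-1) ->
  ((ln w%:R)%:E <= graph_entropy e p)%E.
Proof.
move=> w0 [p0 p1] hb; apply: le_ereal_inf_tmp => _ [a Va <-].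
have a0 := VP_ge0 Va; have a1 := VP_le1 Va.
have wn0 : (w%:R : R) != 0 by rewrite pnatr_eq0 -lt0n.
have wp : (0 : R) < w%:R by rewrite ltr0n.
case: (boolP [exists x, (p x != 0) && (a x == 0)]).
  case/existsP => x /andP [px ax].
  rewrite (bigD1 x) //= /ent_term (negbTE px) ax addye ?leey //.
  have : (0 <= \sum_(y | y != x) ent_term (p y) (a y))%E.
    by apply: sume_ge0 => y _; apply: ent_term_ge0.
  by case: (\sum_(y | y != x) _).
move=> hno.
rewrite (eq_bigr (fun x => (p x * ln (a x)^-1)%:E)); last first.
  move=> x _; rewrite /ent_term; case: ifP => [/eqP ->|px]; first by rewrite mul0r.
  case: ifP => // ax; exfalso; move/negP: hno; apply; apply/existsP; exists x.
  by rewrite px ax.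
rewrite sumEFin lee_fin.
have hterm : forall x, p x * (ln w%:R + 1 - w%:R * a x) <= p x * ln (a x)^-1.
  move=> x; case: (eqVneq (p x) 0) => [->|px]; first by rewrite !mul0r.
  apply: ler_wpM2l => //.
  have ax : 0 < a x.
    rewrite lt_def a0 andbT; apply/negP => ax; move/negP: hno; apply; apply/existsP; exists x.
    by rewrite px ax.
  rewrite lnV ?posrE //.
  have := ln_le_sub1 (mulr_gt0 wp ax); rewrite lnM ?posrE //.
  lra.
apply: le_trans (ler_sum _ (fun x _ => hterm x)).
rewrite (eq_bigr (fun x => p x * (ln w%:R + 1) - w%:R * (p x * a x))); last first.
  by move=> x _; rewrite mulrDr mulrN mulrCA.
rewrite sumrB -mulr_suml p1 -mulr_sumr.
have hX : w%:R * \sum_(x : T) p x * a x <= 1.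
  by rewrite -[X in _ <= X](mulfV wn0); exact: (ler_wpM2l (ltW wp) (hb a Va)).
lra.
Qed.

End Ent.

Section Main.
Local Open Scope ring_scope.

Lemma sum_ind_mem (R : realType) (T : finType) (K : {set T}) (f : T -> R) :
  \sum_(x : T) (x \in K)%:R * f x = \sum_(x in K) f x.
Proof.
rewrite [RHS]big_mkcond /=; apply: eq_bigr => x _.
by case: (x \in K); rewrite ?mul1r ?mul0r.
Qed.

Theorem mainTheorem2 (R : realType) (T : finType) (e : rel T)
  (e_sym : symmetric e) (e_irr : irreflexive e)
  (T_nonempty : (0 < #|T|)%N)
  (Hperf : perfect e) :
  entropy_symmetric R e <->
  exists P : {set {set T}},
    finset.partition P [set: T] /\
    (forall B, B \in P -> is_clique e B /\ #|B| = clique_number e).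
Proof.
have he := perfect_hp e_irr Hperf.
set n := #|T|; set w := clique_number e.
have [g [hg1 hg2]] := he [set: T].
case/card_gt0P: T_nonempty => x0 _.
have w0 : (0 < w)%N.
  apply: leq_trans (omg_ge (S := [set x0]) _ _); first by rewrite cards1.
    exact: subsetT.
  by apply/cliqueP => a b; rewrite !inE => /eqP -> /eqP ->; rewrite eqxx.
have Vc : VP e (fun _ => (w%:R : R)^-1).
  apply: (@VP_const R T e g w w0); first by move=> x; apply: hg1; exact: in_setT.
  by move=> x y; apply: hg2; exact: in_setT.
have wp : (0 : R) < w%:R by rewrite ltr0n.
have np : (0 : R) < n%:R by rewrite ltr0n /n; apply/card_gt0P; exists x0.
have Uprob : prob_dist (@uniform_dist R T).
  split; first by move=> x; rewrite /uniform_dist invr_ge0 ler0n.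
  rewrite /uniform_dist sumr_const -[(_)^-1 *+ _]mulr_natr mulVf //; exact: lt0r_neq0.
split.
- move=> Hsym; apply: F5 => //.
  rewrite leqNgt; apply/negP => hlt.
  have [K [_ Kcl Kc]] := omg_ex e [set: T].
  pose pK (x : T) : R := (x \in K)%:R / w%:R.
  have pKprob : prob_dist pK.
    split; first by move=> x; rewrite /pK; apply: divr_ge0; apply: ler0n.
    by rewrite /pK -mulr_suml sum_mem Kc mulfV //; exact: lt0r_neq0.
  have hlow : ((ln w%:R)%:E <= graph_entropy e (@uniform_dist R T))%E.
    apply: le_trans (Hsym pK pKprob); apply: GE_lower => // a Va.
    rewrite /pK (eq_bigr (fun x => (w%:R)^-1 * ((x \in K)%:R * a x))); last first.
      by move=> x _; rewrite mulrAC mulrC.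
    rewrite -mulr_sumr sum_ind_mem -[X in _ <= X]mulr1.
    apply: ler_wpM2l; first by rewrite invr_ge0 ler0n.
    exact: (VP_clique Va Kcl).
  have [S0 [_ S0st S0c]] := alp_ex e [set: T].
  set al := alp e [set: T].
  have hltR : (n%:R + 1 : R) <= al%:R * w%:R.
    by rewrite natr1 -natrM ler_nat.
  have w1 : (1 : R) <= w%:R by rewrite ler1n.
  have wn0 : (w%:R : R) != 0 by exact: lt0r_neq0.
  have nn0 : (n%:R : R) != 0 by exact: lt0r_neq0.
  set t : R := (2 * n%:R * w%:R)^-1.
  have t0 : 0 < t by rewrite /t invr_gt0; apply: mulr_gt0 => //; apply: mulr_gt0.
  have hntw : n%:R * (t * w%:R) = 2^-1 by rewrite /t; field; rewrite nn0 wn0.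
  have hnt : 0 < n%:R * t by apply: mulr_gt0.
  have t1 : t <= 2^-1.
    have : n%:R * t <= n%:R * (t * w%:R).
      rewrite ler_wpM2l ?(ltW np) // -[X in X <= _]mulr1; apply: ler_wpM2l => //.
      exact: ltW.
    rewrite hntw => h; apply: le_trans h; rewrite -[X in X <= _]mul1r.
    have n1 : (1 : R) <= n%:R by rewrite ler1n -(ltr0n R).
    nra.
  pose at' (x : T) : R := (1 - t) * (w%:R)^-1 + t * (x \in S0)%:R.
  have Vat : VP e at'.
    apply: VP_mix => //; apply/andP; split; [exact: ltW | lra].
  have atpos : forall x, 0 < at' x.
    move=> x; rewrite /at'.
    have h2 : 0 <= t * (x \in S0)%:R by apply: mulr_ge0; [exact: ltW | exact: ler0n].
    have h1 : 0 < (1 - t) * (w%:R)^-1 by apply: mulr_gt0; [lra | rewrite invr_gt0].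
    lra.
  have hup := ent_le (@uniform_dist R T) Vat.
  have nin0 : (n%:R : R)^-1 != 0 by rewrite invr_eq0.
  rewrite (eq_bigr (fun x => ((n%:R)^-1 * ln (at' x)^-1)%:E)) in hup; last first.
    move=> x _; rewrite /ent_term /uniform_dist (negbTE nin0).
    by rewrite (negbTE (lt0r_neq0 (atpos x))).
  rewrite sumEFin in hup.
  set u : R := 1 - t; set v : R := 1 - t + t * w%:R.
  have up : 0 < u by rewrite /u; lra.
  have vp : 0 < v.
    have : 0 <= t * w%:R by apply: mulr_ge0 => //; exact: ltW.
    rewrite /v; lra.
  set b0 : R := u^-1 - 1; set d0 : R := v^-1 - u^-1.
  have hterm : forall x, (n%:R)^-1 * ln (at' x)^-1 <= (n%:R)^-1 * (ln w%:R + (b0 + d0 * (x \in S0)%:R)).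
    move=> x; apply: ler_wpM2l; first by rewrite invr_ge0 ler0n.
    have ax := atpos x.
    have wax : 0 < w%:R * at' x by apply: mulr_gt0.
    have L1 := lnV (ax : at' x \in Num.pos).
    have L2 := lnM (wp : _ \in Num.pos) (ax : at' x \in Num.pos).
    have L3 := lnV (wax : _ \in Num.pos).
    have L4 : ln (w%:R * at' x)^-1 <= (w%:R * at' x)^-1 - 1.
      by apply: ln_le_sub1; rewrite invr_gt0.
    have E : (w%:R * at' x)^-1 - 1 = b0 + d0 * (x \in S0)%:R.
      rewrite /at' /b0 /d0 /u /v; case: (x \in S0) => /=.
        by rewrite mulr1 mulrDr mulrA (mulrC _ (1 - t)) -mulrA mulfV // mulr1 mulrC; ring.
      by rewrite mulr0 addr0 mulrCA mulfV // mulr1 mulr0 addr0.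
    rewrite -E; lra.
  have hsum : \sum_(x : T) (n%:R)^-1 * ln (at' x)^-1 <
              ln w%:R.
    apply: le_lt_trans (ler_sum _ (fun x _ => hterm x)) _.
    rewrite -mulr_sumr big_split /= sumr_const big_split /= sumr_const -mulr_sumr sum_mem S0c -/al.
    rewrite -[ln _ *+ _]mulr_natr -[b0 *+ _]mulr_natr.
    have key : n%:R * b0 + al%:R * d0 < 0.
      have E : n%:R * b0 + al%:R * d0 = t * (n%:R * v - al%:R * w%:R) * (u^-1 * v^-1).
        rewrite /b0 /d0 /u /v; field.
        by rewrite -/u -/v (lt0r_neq0 up) (lt0r_neq0 vp).
      rewrite E pmulr_llt0; last by apply: mulr_gt0; rewrite invr_gt0.
      rewrite pmulr_rlt0 //.
      have -> : n%:R * v = n%:R - n%:R * t + n%:R * (t * w%:R) by rewrite /v; ring.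
      lra.
    have -> : (n%:R)^-1 * (ln w%:R * n%:R + (b0 * n%:R + d0 * al%:R)) =
              ln w%:R + (n%:R)^-1 * (n%:R * b0 + al%:R * d0) by field.
    have : (n%:R)^-1 * (n%:R * b0 + al%:R * d0) < 0 by rewrite pmulr_rlt0 // invr_gt0.
    lra.
  have := le_trans hlow hup; rewrite lee_fin => h.
  by move: (le_lt_trans h hsum); rewrite ltxx.
- case=> P [hP hB] p pp.
  apply: le_trans (GE_upper pp Vc w0) (GE_lower w0 Uprob _) => a Va.
  have hn : n = (#|P| * w)%N.
    rewrite /n -cardsT; apply: card_uniform_partition hP => B /hB [].
    by [].
  have Ppos : (0 : R) < #|P|%:R.
    by rewrite ltr0n lt0n; apply/eqP => hP0; move: np; rewrite hn hP0 mul0n ltxx.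
  have hsum : \sum_(x : T) a x <= #|P|%:R.
    have -> : \sum_(x : T) a x = \sum_(x in finset.cover P) a x.
      by move/and3P: hP => [/eqP -> _ _]; apply: eq_bigl => x; rewrite in_setT.
    rewrite big_trivIset; last by move/and3P: hP => [].
    rewrite -sumr_const; apply: ler_sum => B /hB [Bcl _]; exact: (VP_clique Va Bcl).
  rewrite /uniform_dist -mulr_sumr.
  apply: le_trans (ler_wpM2l _ hsum) _; first by rewrite invr_ge0 ler0n.
  rewrite (_ : #|T| = (#|P| * w)%N) // natrM invfM mulrAC mulVf ?mul1r //; exact: lt0r_neq0.
Qed.
End Main.
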